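(* Let $g:[a,b]\to\mathbb R$ be a derivator with $D_g$ finite; write $D_g=\{x_1<x_2<\dots<x_{n-1}\}$ and set $x_0=a$, $x_n=b$ (so $x_1=a$ if $a\in D_g$). Then the linear map $$\Psi:\mathrm{UC}_g([a,b])\to\mathrm{UC}_{g^C}([x_0,x_1])\oplus\bigoplus_{j=2}^n\mathrm{UC}_{g^C}((x_{j-1},x_j]),\qquad \Psi(f)=\big(f|_{[x_0,x_1]},f|_{(x_1,x_2]},\dots,f|_{(x_{n-1},x_n]}\big),$$ is an isometric isomorphism, where the direct sum carries the norm $\|(v_1,\dots,v_n)\|=\max_j\|v_j\|_\infty$.
   Context: $\mathbb F\in\{\mathbb R,\mathbb C\}$. A derivator is a nondecreasing, left-continuous $g:[a,b]\to\mathbb R$. For $x\in[a,b)$, $\Delta g(x)=g(x^+)-g(x)$ and $D_g=\{x\in[a,b):\Delta g(x)>0\}$. The jump part is $g^B(x)=\sum_{y\in[a,x)\cap D_g}\Delta g(y)$ and the continuous part is $g^C=g-g^B$ (a continuous derivator). For a derivator $h$ and a set $J\subset[a,b]$ (here an interval), $\mathrm{UC}_h(J)$ is the space of functions $f:J\to\mathbb F$ that are uniformly $h$-continuous on $J$ (for every $\varepsilon>0$ there is $\delta>0$ such that for all $x,y\in J$, $|h(x)-h(y)|<\delta$ implies $|f(x)-f(y)|<\varepsilon$), with the supremum norm over $J$. $\mathrm{UC}_g([a,b])$ is this space for $h=g$, $J=[a,b]$. *)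

(* Defs.v *)
From Stdlib Require Import Reals List Sorted ClassicalEpsilon.
From Coquelicot Require Import Coquelicot.
Open Scope R_scope.

(* g : [a,b] -> R is represented by g : R -> R; only values on [a,b] matter. *)
Definition derivator (a b : R) (g : R -> R) : Prop :=
  (forall x y, a <= x -> x <= y -> y <= b -> g x <= g y) /\
  (forall x, a < x <= b -> filterlim g (at_left x) (locally (g x))).

(* g(x^+) : the right limit of g at x (exists for a derivator, x in [a,b)). *)
Definition rlim (g : R -> R) (x : R) : R :=
  epsilon (inhabits 0) (fun l => filterlim g (at_right x) (locally l)).

Definition Delta (g : R -> R) (x : R) : R := rlim g x - g x.

Definition Dg (a b : R) (g : R -> R) (x : R) : Prop :=
  a <= x < b /\ Delta g x > 0.

(* Jump part, for D_g enumerated by the list xs: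
   g^B(x) = sum_{y in [a,x) ∩ D_g} Delta g y   (elements of xs lie in [a,b)). *)
Fixpoint sum_jumps (g : R -> R) (a x : R) (xs : list R) : R :=
  match xs with
  | nil => 0
  | y :: ys =>
      (if Rle_dec a y then if Rlt_dec y x then Delta g y else 0 else 0)
      + sum_jumps g a x ys
  end.

Definition gB (g : R -> R) (a : R) (xs : list R) (x : R) : R := sum_jumps g a x xs.
Definition gC (g : R -> R) (a : R) (xs : list R) (x : R) : R := g x - gB g a xs x.

Definition dom (J : R -> Prop) : Type := {x : R | J x}.

Definition UC {K : AbsRing} (h : R -> R) (J : R -> Prop) (f : dom J -> K) : Prop :=
  forall eps : R, eps > 0 -> exists delta : R, delta > 0 /\
    forall x y : dom J, Rabs (h (proj1_sig x) - h (proj1_sig y)) < delta ->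
      abs (minus (f x) (f y)) < eps.

Definition supn {K : AbsRing} {J : R -> Prop} (f : dom J -> K) : R :=
  real (Lub_Rbar (fun r => exists x, r = abs (f x))).

Definition ab (a b : R) (x : R) : Prop := a <= x <= b.

(* x_0 = a, x_1 < ... < x_{n-1} the elements of xs, x_n = b, n = |xs| + 1 *)
Definition pts (a b : R) (xs : list R) : list R := a :: xs ++ b :: nil.
Definition pt (a b : R) (xs : list R) (i : nat) : R := nth i (pts a b xs) 0.
Definition npieces (xs : list R) : nat := S (length xs).

(* piece j (0-based, j < n): j = 0 : [x_0, x_1];  j >= 1 : (x_j, x_{j+1}].
   (Intersected with [a,b], which does not change it under the hypotheses.) *)
Definition piece (a b : R) (xs : list R) (j : nat) (x : R) : Prop :=
  ab a b x /\
  match j with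
  | O => pt a b xs 0 <= x <= pt a b xs 1
  | S _ => pt a b xs j < x <= pt a b xs (S j)
  end.

Definition Idx (n : nat) : Type := {j : nat | (j < n)%nat}.

Definition DSum (K : AbsRing) (a b : R) (xs : list R) : Type :=
  forall j : Idx (npieces xs), dom (piece a b xs (proj1_sig j)) -> K.

(* max norm on the direct sum (sup over the finite nonempty index set = max) *)
Definition dsnorm {K : AbsRing} {a b : R} {xs : list R} (v : DSum K a b xs) : R :=
  real (Lub_Rbar (fun r => exists j, r = supn (v j))).

Definition Psi {K : AbsRing} (a b : R) (xs : list R) (f : dom (ab a b) -> K)
  : DSum K a b xs :=
  fun j y => f (exist _ (proj1_sig y) (proj1 (proj2_sig y))).

(* Main.v *)
Require Import Defs.
From Stdlib Require Import Reals List Sorted Lra Lia Classical ClassicalEpsilon FunctionalExtensionality.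
From Coquelicot Require Import Coquelicot.
Open Scope R_scope.

Lemma ball_R (x e y : R) : ball x e y <-> Rabs (y - x) < e.
Proof. reflexivity. Qed.

Fixpoint cnt (x : R) (l : list R) : nat :=
  match l with nil => O | y :: ys => ((if Rlt_dec y x then 1 else 0) + cnt x ys)%nat end.

Lemma cnt_le_length x l : (cnt x l <= length l)%nat.
Proof. induction l; simpl; [lia|]. destruct Rlt_dec; lia. Qed.

Lemma cnt_noz x y l : x <= y -> cnt x l = cnt y l -> forall z, In z l -> ~ (x <= z < y).
Proof.
  intros Hxy. induction l as [|w l IH]; simpl; [tauto|].
  intros H z [Hwz|Hz]; [subst w|].
  - assert (cnt x l <= cnt y l)%nat.
    { clear -Hxy. induction l; simpl; [lia|]. repeat destruct Rlt_dec; try lia; lra. }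
    destruct (Rlt_dec z x), (Rlt_dec z y); lra || lia.
  - apply IH; auto.
    assert (cnt x l <= cnt y l)%nat.
    { clear -Hxy. induction l; simpl; [lia|]. repeat destruct Rlt_dec; try lia; lra. }
    destruct (Rlt_dec w x), (Rlt_dec w y); try lia; lra.
Qed.

Lemma noz_cnt x y l : x <= y -> (forall z, In z l -> ~ (x <= z < y)) -> cnt x l = cnt y l.
Proof.
  intros Hxy. induction l as [|w l IH]; simpl; auto.
  intros H. rewrite IH by auto.
  specialize (H w (or_introl eq_refl)).
  destruct (Rlt_dec w x), (Rlt_dec w y); try lia; lra.
Qed.

Lemma noz_sj g a x y l : x <= y -> (forall z, In z l -> ~ (x <= z < y)) ->
  sum_jumps g a x l = sum_jumps g a y l.
Proof.
  intros Hxy. induction l as [|w l IH]; simpl; auto.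
  intros H. rewrite IH by auto.
  specialize (H w (or_introl eq_refl)).
  destruct Rle_dec; auto. destruct (Rlt_dec w x), (Rlt_dec w y); try lra.
Qed.

Lemma gB_eq g a l x y : cnt x l = cnt y l -> gB g a l x = gB g a l y.
Proof.
  unfold gB. intros H. destruct (Rle_dec x y).
  - apply noz_sj; auto. apply cnt_noz; auto.
  - symmetry. apply noz_sj; [lra|]. apply cnt_noz; auto; lra.
Qed.

Lemma cnt0 x l : (forall z, In z l -> x <= z) -> cnt x l = O.
Proof.
  induction l; simpl; auto. intros H. rewrite IHl by (intros; apply H; simpl; auto).
  specialize (H a (or_introl eq_refl)). destruct Rlt_dec; [lra|reflexivity].
Qed.

Definition Q (b : R) (l : list R) (j : nat) (x : R) : Prop :=
  match j with
  | O => x <= nth 0 (l ++ b :: nil) 0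
  | S k => nth k (l ++ b :: nil) 0 < x <= nth (S k) (l ++ b :: nil) 0
  end.

Lemma nth_ge (y b : R) L k : (k < length L)%nat -> (forall z, In z L -> y < z) -> y < nth k L 0.
Proof. intros Hk H. apply H. apply nth_In; auto. Qed.

Lemma cnt_Q b l : StronglySorted Rlt l -> (forall z, In z l -> z < b) ->
  forall j x, (j <= length l)%nat -> x <= b -> (cnt x l = j <-> Q b l j x).
Proof.
  induction l as [|y ys IH]; intros Hs Hb j x Hj Hx.
  - simpl in Hj. assert (j = O) by lia. subst. simpl. split; auto.
  - inversion Hs as [|? ? Hs' Hall]; subst.
    rewrite Forall_forall in Hall.
    assert (HL : forall z, In z (ys ++ b :: nil) -> y < z).
    { intros z Hz. apply in_app_or in Hz. destruct Hz as [Hz|[<-|[]]]; auto.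
      apply Hb; simpl; auto. }
    assert (Hlen : length (ys ++ b :: nil) = S (length ys)).
    { rewrite length_app; simpl; lia. }
    simpl in Hj.
    specialize (IH Hs' (fun z Hz => Hb z (or_intror Hz))).
    simpl cnt. destruct (Rlt_dec y x) as [Hyx|Hyx].
    + destruct j as [|k].
      * simpl. split; [lia|]. intros. lra.
      * specialize (IH k x ltac:(lia) Hx).
        unfold Q in *. simpl app. destruct k as [|m].
        -- simpl nth. split; [intros H; split; [lra| apply IH; lia]|]. intros [_ H]. apply IH in H. lia.
        -- change (nth (S m) (y :: ys ++ b :: nil) 0) with (nth m (ys ++ b :: nil) 0).
           change (nth (S (S m)) (y :: ys ++ b :: nil) 0) with (nth (S m) (ys ++ b :: nil) 0).
           split; [intros H; apply IH; lia|]. intros H. apply IH in H. lia.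
    + rewrite cnt0 by (intros z Hz; specialize (Hall z Hz); lra).
      destruct j as [|k].
      * simpl. split; auto; lra.
      * unfold Q. split; [lia|]. intros [H1 H2].
        exfalso. simpl app in H1.
        destruct k as [|m]; simpl nth in H1; [lra|].
        assert (y < nth m (ys ++ b :: nil) 0) by (apply nth_ge; auto; lia). lra.
Qed.

Lemma piece_iff a b xs j x : StronglySorted Rlt xs -> (forall z, In z xs -> z < b) ->
  (j <= length xs)%nat -> (piece a b xs j x <-> ab a b x /\ cnt x xs = j).
Proof.
  intros Hs Hb Hj. unfold piece, pt, pts.
  destruct j as [|k].
  - simpl nth. split.
    + intros [Hab Hx]. split; auto. apply (cnt_Q b xs Hs Hb O x); [lia| unfold ab in Hab; lra| exact (proj2 Hx)].
    + intros [Hab Hc]. split; auto. split; [unfold ab in Hab; lra|].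
      apply (cnt_Q b xs Hs Hb O x); [lia| unfold ab in Hab; lra| auto].
  - change (nth (S k) (a :: xs ++ b :: nil) 0) with (nth k (xs ++ b :: nil) 0).
    change (nth (S (S k)) (a :: xs ++ b :: nil) 0) with (nth (S k) (xs ++ b :: nil) 0).
    split.
    + intros [Hab Hx]. split; auto. apply (cnt_Q b xs Hs Hb (S k) x); auto. unfold ab in Hab; lra.
    + intros [Hab Hc]. split; auto. apply (cnt_Q b xs Hs Hb (S k) x); auto. unfold ab in Hab; lra.
Qed.

Lemma plus_minus_K {G : AbelianGroup} (x y : G) : plus y (minus x y) = x.
Proof. unfold minus. rewrite (plus_comm x), plus_assoc, plus_opp_r, plus_zero_l. auto. Qed.

Lemma abs_le_tri {K : AbsRing} (x y : K) : abs x <= abs y + abs (minus x y).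
Proof. rewrite <- (plus_minus_K x y) at 1. apply abs_triangle. Qed.

Lemma rlim_spec a b g x : derivator a b g -> a <= x < b ->
  filterlim g (at_right x) (locally (rlim g x)).
Proof.
  intros [Hm _] Hx. unfold rlim. apply epsilon_spec.
  set (E := fun r => exists t, x < t <= b /\ r = g t).
  assert (Hlb : forall t, x < t <= b -> g x <= g t) by (intros; apply Hm; lra).
  pose proof (Glb_Rbar_correct E) as [H1 H2].
  destruct (Glb_Rbar E) as [L| |] eqn:HL.
  - exists L. apply filterlim_locally. intros eps.
    assert (Hex : exists t, x < t <= b /\ g t < L + eps).
    { apply NNPP. intros Hn.
      assert (Rbar_le (L + eps) L).
      { apply H2. intros r [t [Ht ->]]. simpl. apply Rnot_lt_le. intros Hlt. apply Hn. exists t; auto. }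
      simpl in H. destruct eps; simpl in *; lra. }
    destruct Hex as [t [Ht Hgt]].
    unfold at_right, within, locally.
    assert (Hd : 0 < t - x) by lra.
    exists (mkposreal _ Hd). intros u Hu Hxu. simpl in Hu. rewrite ball_R in Hu |- *.
    apply Rabs_lt_between' in Hu.
    assert (g u <= g t) by (apply Hm; lra).
    assert (Rbar_le L (g u)) by (apply H1; exists u; split; auto; lra).
    simpl in H0. apply Rabs_lt_between'. lra.
  - exfalso. assert (Rbar_le p_infty (g b)) by (apply H1; exists b; split; auto; lra). simpl in H; auto.
  - exfalso. assert (Rbar_le (g x) m_infty).
    { apply H2. intros r [t [Ht ->]]. simpl. apply Hlb; auto. }
    simpl in H; auto.
Qed.

Lemma rlim_le a b g x y : derivator a b g -> a <= x < b -> x < y <= b -> rlim g x <= g y.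
Proof.
  intros Hd Hx Hy. pose proof (rlim_spec a b g x Hd Hx) as Hl.
  destruct Hd as [Hm _].
  apply Rnot_lt_le. intros Hlt.
  assert (He : 0 < rlim g x - g y) by lra.
  apply filterlim_locally with (eps := mkposreal _ He) in Hl.
  destruct Hl as [d Hd]. simpl in Hd.
  set (u := x + Rmin d (y - x) / 2).
  assert (0 < Rmin d (y - x)) by (destruct d; apply Rmin_pos; simpl; lra).
  assert (Rmin d (y - x) <= d) by apply Rmin_l.
  assert (Rmin d (y - x) <= y - x) by apply Rmin_r.
  specialize (Hd u). rewrite ball_R in Hd.
  assert (Hu : Rabs (u - x) < d) by (unfold u; rewrite Rabs_pos_eq; lra).
  specialize (Hd Hu ltac:(unfold u; lra)).
  rewrite ball_R in Hd. apply Rabs_lt_between' in Hd.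
  assert (g u <= g y) by (apply Hm; unfold u; lra). lra.
Qed.

Lemma Lub_le (E : R -> Prop) u : (forall r, E r -> r <= u) -> 0 <= u -> real (Lub_Rbar E) <= u.
Proof.
  intros H Hu. pose proof (Lub_Rbar_correct E) as [H1 H2].
  assert (Rbar_le (Lub_Rbar E) u) by (apply H2; intros r Hr; apply H; auto).
  destruct (Lub_Rbar E); simpl in *; auto; contradiction.
Qed.

Lemma Lub_ge (E : R -> Prop) r M : E r -> (forall r, E r -> r <= M) -> r <= real (Lub_Rbar E).
Proof.
  intros Hr H. pose proof (Lub_Rbar_correct E) as [H1 H2].
  assert (Rbar_le (Lub_Rbar E) M) by (apply H2; intros s Hs; apply H; auto).
  specialize (H1 r Hr).
  destruct (Lub_Rbar E); simpl in *; auto; contradiction.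
Qed.

Lemma fin_min n (P : nat -> R -> Prop) :
  (forall j d d', 0 < d' <= d -> P j d -> P j d') ->
  (forall j, (j < n)%nat -> exists d, d > 0 /\ P j d) ->
  exists d, d > 0 /\ forall j, (j < n)%nat -> P j d.
Proof.
  intros Hmono. induction n as [|n IH]; intros H.
  - exists 1. split; [lra|]. intros; lia.
  - destruct IH as [d1 [Hd1 H1]]. { intros j Hj. apply H. lia. }
    destruct (H n ltac:(lia)) as [d2 [Hd2 H2]].
    exists (Rmin d1 d2). split; [apply Rmin_pos; lra|].
    intros j Hj. destruct (Nat.eq_dec j n) as [->|Hne].
    + apply Hmono with d2; auto. split; [apply Rmin_pos; lra| apply Rmin_r].
    + apply Hmono with d1; [split; [apply Rmin_pos; lra| apply Rmin_l]|]. apply H1; lia.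
Qed.

Lemma min_jump (g : R -> R) (l : list R) : (forall z, In z l -> Defs.Delta g z > 0) ->
  exists m, m > 0 /\ forall z, In z l -> m <= Defs.Delta g z.
Proof.
  induction l as [|w l IH]; intros H.
  - exists 1. split; [lra|]. intros z [].
  - destruct IH as [m [Hm H1]]. { intros; apply H; simpl; auto. }
    exists (Rmin m (Defs.Delta g w)). split. { apply Rmin_pos; auto. apply H; simpl; auto. }
    intros z [<-|Hz]. apply Rmin_r. eapply Rle_trans; [apply Rmin_l| auto].
Qed.

Lemma UC_bounded {K : AbsRing} a b g (f : dom (ab a b) -> K) :
  derivator a b g -> a <= b -> UC g (ab a b) f -> exists M, forall x, abs (f x) <= M.
Proof.
  intros [Hm _] Hab Huc.
  destruct (Huc 1 ltac:(lra)) as [d [Hd Hu]].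
  assert (Ha : ab a b a) by (unfold ab; lra).
  set (a0 := exist (ab a b) a Ha).
  assert (Hk : forall k : nat, exists M, forall x : dom (ab a b),
    g (proj1_sig x) <= g a + INR k * (d/2) -> abs (f x) <= M).
  { induction k as [|k [M HM]].
    - exists (abs (f a0) + 1). intros [x Hx] Hgx. simpl in Hgx. change (INR 0) with 0 in Hgx.
      assert (g a <= g x) by (apply Hm; unfold ab in Hx; lra).
      specialize (Hu (exist _ x Hx) a0). simpl in Hu.
      assert (Habs : Rabs (g x - g a) < d) by (rewrite Rabs_pos_eq; lra).
      specialize (Hu Habs). pose proof (abs_le_tri (f (exist _ x Hx)) (f a0)). eapply Rle_trans; [exact H0|lra].
    - destruct (classic (exists x0 : dom (ab a b), g a + INR k * (d/2) < g (proj1_sig x0) <= g a + INR (S k) * (d/2)))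
        as [[x0 Hx0]|Hno].
      + exists (Rmax M (abs (f x0) + 1)). intros x Hx.
        destruct (Rle_dec (g (proj1_sig x)) (g a + INR k * (d/2))).
        * eapply Rle_trans; [apply HM; auto| apply Rmax_l].
        * rewrite S_INR in *. specialize (Hu x x0).
          assert (Habs : Rabs (g (proj1_sig x) - g (proj1_sig x0)) < d) by (apply Rabs_def1; lra).
          specialize (Hu Habs). pose proof (abs_le_tri (f x) (f x0)).
          eapply Rle_trans; [|apply Rmax_r]. lra.
      + exists M. intros x Hx. apply HM.
        apply Rnot_lt_le. intros Hlt. apply Hno. exists x. split; auto. }
  destruct (nfloor_ex (Rabs ((g b - g a) / (d/2))) (Rabs_pos _)) as [k Hk2].
  destruct (Hk (S k)) as [M HM]. exists M. intros [x Hx]. apply HM. cbn [proj1_sig].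
  assert (g x <= g b) by (apply Hm; unfold ab in Hx; lra).
  rewrite ?S_INR.
  assert ((g b - g a) / (d/2) <= INR k + 1) by (pose proof (Rle_abs ((g b - g a) / (d/2))); lra).
  assert (g b - g a <= (INR k + 1) * (d/2)).
  { apply Rmult_le_compat_r with (r := d/2) in H0; [|lra].
    unfold Rdiv in H0 at 1. rewrite Rmult_assoc, Rinv_l in H0 by lra. lra. }
  lra.
Qed.

Definition glue {K : AbsRing} a b xs (v : DSum K a b xs) (x : dom (ab a b)) : K :=
  epsilon (inhabits zero) (fun k => exists (j : Idx (npieces xs))
    (p : piece a b xs (proj1_sig j) (proj1_sig x)), k = v j (exist _ (proj1_sig x) p)).

Lemma glue_E {K : AbsRing} a b xs (v : DSum K a b xs) :
  StronglySorted Rlt xs -> (forall z, In z xs -> z < b) ->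
  forall x j p, glue a b xs v x = v j (exist _ (proj1_sig x) p).
Proof.
  intros Hs Hb x j p. unfold glue.
  destruct (@epsilon_spec K (inhabits zero) (fun k => exists (j : Idx (npieces xs))
    (p : piece a b xs (proj1_sig j) (proj1_sig x)), k = v j (exist _ (proj1_sig x) p)))
    as [j' [p' E]].
  { exists (v j (exist _ (proj1_sig x) p)), j, p. reflexivity. }
  transitivity (v j' (exist _ (proj1_sig x) p')); [exact E|]. clear E.
  destruct j as [j Hj], j' as [j' Hj']; simpl in *.
  unfold npieces in *.
  apply piece_iff in p as P1; auto; [|lia].
  apply piece_iff in p' as P2; auto; [|lia].
  assert (j = j') by lia. subst j'.
  rewrite (proof_irrelevance _ Hj' Hj). rewrite (proof_irrelevance _ p' p). reflexivity.
Qed.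

Theorem mainTheorem16 :
  forall (K : AbsRing), K = R_AbsRing \/ K = C_AbsRing ->
  forall (a b : R) (g : R -> R) (xs : list R),
    a < b ->
    derivator a b g ->
    Sorted Rlt xs ->
    (forall x, Dg a b g x <-> In x xs) ->
    (* Psi maps UC_g([a,b]) into the direct sum of the UC_{g^C}(pieces) *)
    (forall f : dom (ab a b) -> K, UC g (ab a b) f ->
       forall j : Idx (npieces xs), UC (gC g a xs) (piece a b xs (proj1_sig j)) (Psi a b xs f j)) /\
    (* linear *)
    (forall (c : K) (f1 f2 : dom (ab a b) -> K),
       Psi a b xs (fun x => plus (mult c (f1 x)) (f2 x)) =
       (fun j y => plus (mult c (Psi a b xs f1 j y)) (Psi a b xs f2 j y))) /\
    (* injective on UC_g([a,b]) *)
    (forall f1 f2 : dom (ab a b) -> K, UC g (ab a b) f1 -> UC g (ab a b) f2 ->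
       Psi a b xs f1 = Psi a b xs f2 -> f1 = f2) /\
    (* onto the direct sum *)
    (forall v : DSum K a b xs,
       (forall j : Idx (npieces xs), UC (gC g a xs) (piece a b xs (proj1_sig j)) (v j)) ->
       exists f : dom (ab a b) -> K, UC g (ab a b) f /\ Psi a b xs f = v) /\
    (* isometric *)
    (forall f : dom (ab a b) -> K, UC g (ab a b) f ->
       supn f = dsnorm (Psi a b xs f)).
Proof.
  intros K _ a b g xs Hab Hder Hsort HDg.
  assert (Hs : StronglySorted Rlt xs).
  { apply Sorted_StronglySorted; auto. intros x y z; apply Rlt_trans. }
  assert (Hin : forall z, In z xs -> (a <= z < b) /\ Defs.Delta g z > 0).
  { intros z Hz. apply HDg in Hz. exact Hz. }
  assert (Hb : forall z, In z xs -> z < b) by (intros z Hz; apply Hin; auto).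
  assert (Hcnt : forall x, (cnt x xs < npieces xs)%nat).
  { intros x. pose proof (cnt_le_length x xs). unfold npieces. lia. }
  assert (Hpc : forall x, ab a b x -> piece a b xs (cnt x xs) x).
  { intros x Hx. apply piece_iff; auto. apply cnt_le_length. }
  assert (HgC : forall j x y, (j < npieces xs)%nat -> piece a b xs j x -> piece a b xs j y ->
     gC g a xs x - gC g a xs y = g x - g y).
  { intros j x y Hj Px Py. unfold npieces in Hj.
    apply piece_iff in Px; auto; [|lia]. apply piece_iff in Py; auto; [|lia].
    unfold gC. rewrite (gB_eq g a xs x y) by lia. ring. }
  split; [|split; [|split; [|split]]].
  -
    intros f Huc [j Hj] eps Heps. destruct (Huc eps Heps) as [d [Hd Hu]].
    exists d. split; auto. intros [x px] [y py] Hxy. unfold Psi; simpl in *.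
    apply Hu. simpl. rewrite <- (HgC j x y); auto.
  - reflexivity.
  - intros f1 f2 _ _ Heq. apply functional_extensionality. intros [x Hx].
    pose proof (Hpc x Hx) as p.
    apply (f_equal (fun F : DSum K a b xs => F (exist _ (cnt x xs) (Hcnt x)) (exist _ x p))) in Heq.
    unfold Psi in Heq; simpl in Heq.
    rewrite (proof_irrelevance _ Hx (proj1 p)). exact Heq.
  - intros v Hv. exists (glue a b xs v). split.
    + intros eps Heps.
      destruct (fin_min (npieces xs) (fun j d => forall (H : (j < npieces xs)%nat)
          (x y : dom (piece a b xs j)),
          Rabs (gC g a xs (proj1_sig x) - gC g a xs (proj1_sig y)) < d ->
          abs (minus (v (exist _ j H) x) (v (exist _ j H) y)) < eps)) as [d [Hd Hdall]].
      { intros j d d' Hd' P H x y Hxy. apply P. lra. }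
      { intros j Hj. destruct (Hv (exist _ j Hj) eps Heps) as [d [Hd P]].
        exists d. split; auto. intros H x y Hxy.
        rewrite (proof_irrelevance _ H Hj). apply P. exact Hxy. }
      destruct (min_jump g xs) as [m [Hm Hmj]]. { intros z Hz; apply Hin; auto. }
      assert (Hsep : forall x y, ab a b x -> ab a b y -> x <= y -> cnt x xs <> cnt y xs ->
          m <= g y - g x).
      { intros x y Hx Hy Hxy Hne.
        destruct (classic (exists z, In z xs /\ x <= z < y)) as [[z [Hz Hxz]]|Hno].
        - specialize (Hmj z Hz). destruct (Hin z Hz) as [Hz1 _].
          pose proof (rlim_le a b g z y Hder ltac:(lra) ltac:(unfold ab in Hy; lra)).
          destruct Hder as [Hmo _].
          assert (g x <= g z) by (apply Hmo; unfold ab in Hx; lra).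
          unfold Defs.Delta in Hmj. lra.
        - exfalso. apply Hne. apply noz_cnt; auto. intros z Hz Hc. apply Hno. eauto. }
      exists (Rmin d m). split; [apply Rmin_pos; lra|].
      intros [x Hx] [y Hy] Hxy. simpl in Hxy.
      destruct (Nat.eq_dec (cnt x xs) (cnt y xs)) as [He|Hne].
      * pose proof (Hpc x Hx) as px. pose proof (Hpc y Hy) as py. rewrite <- He in py.
        rewrite (glue_E a b xs v Hs Hb (exist (fun x0 : R => ab a b x0) x Hx) (exist _ (cnt x xs) (Hcnt x)) px).
        rewrite (glue_E a b xs v Hs Hb (exist (fun x0 : R => ab a b x0) y Hy) (exist _ (cnt x xs) (Hcnt x)) py).
        apply (Hdall (cnt x xs) (Hcnt x) (Hcnt x) (exist _ x px) (exist _ y py)).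
        simpl. rewrite (HgC (cnt x xs) x y); auto.
        eapply Rlt_le_trans; [exact Hxy| apply Rmin_l].
      * exfalso. assert (Rabs (g x - g y) < m) by (eapply Rlt_le_trans; [exact Hxy| apply Rmin_r]).
        destruct (Rle_dec x y).
        -- pose proof (Hsep x y Hx Hy r Hne). apply Rabs_def2 in H. lra.
        -- pose proof (Hsep y x Hy Hx ltac:(lra) (fun E => Hne (eq_sym E))). apply Rabs_def2 in H. lra.
    + apply functional_extensionality_dep. intros j. apply functional_extensionality. intros [y py].
      unfold Psi. simpl. exact (glue_E a b xs v Hs Hb (exist _ y (proj1 py)) j py).
  - intros f Huc.
    destruct (UC_bounded a b g f Hder ltac:(lra) Huc) as [M HM].
    assert (Ha : ab a b a) by (unfold ab; lra).
    assert (HM0 : 0 <= M) by (eapply Rle_trans; [apply (@abs_ge_0 K)| apply (HM (exist _ a Ha))]).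
    assert (Hsf : forall x, abs (f x) <= supn f).
    { intros x. unfold supn. apply Lub_ge with M; [eauto| intros r [y ->]; auto]. }
    assert (Hpj : forall j, supn (Psi a b xs f j) <= M).
    { intros j. unfold supn. apply Lub_le; auto. intros r [y ->]. unfold Psi. apply HM. }
    assert (Hch : forall x, abs (f x) <= dsnorm (Psi a b xs f)).
    { intros [x Hx]. pose proof (Hpc x Hx) as p.
      apply Rle_trans with (supn (Psi a b xs f (exist _ (cnt x xs) (Hcnt x)))).
      - unfold supn. apply Lub_ge with M.
        + exists (exist _ x p). unfold Psi. simpl.
          rewrite (proof_irrelevance _ Hx (proj1 p)). reflexivity.
        + intros r [y ->]. unfold Psi. apply HM.
      - unfold dsnorm. apply Lub_ge with M; eauto.
        intros r [j ->]. auto. }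
    apply Rle_antisym.
    + unfold supn at 1. apply Lub_le.
      * intros r [x ->]. auto.
      * eapply Rle_trans; [apply (@abs_ge_0 K)| apply (Hch (exist _ a Ha))].
    + unfold dsnorm. apply Lub_le.
      * intros r [j ->]. unfold supn at 1. apply Lub_le.
        -- intros r [y ->]. unfold Psi. apply Hsf.
        -- eapply Rle_trans; [apply (@abs_ge_0 K)| apply (Hsf (exist _ a Ha))].
      * eapply Rle_trans; [apply (@abs_ge_0 K)| apply (Hsf (exist _ a Ha))].
Qed.
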